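(* Let $\{R_i\}_{i\in I}$ be a family of commutative rings with identity and $R=\prod_{i\in I}R_i$. Then $R$ is nearly reduced if and only if each $R_i$ is nearly reduced.
   Context: For a ring $A$, $\mathfrak{N}(A)$ is the nilradical, $\mathrm{reg}(A)$ the set of regular elements (non-zero-divisors), and $\mathrm{areg}(A)=\{x\in A: x+\mathfrak{N}(A)\in\mathrm{reg}(A/\mathfrak{N}(A))\}$ (equivalently, $xa\in\mathfrak{N}(A)$ implies $a\in\mathfrak{N}(A)$). $A$ is nearly reduced if $\mathrm{reg}(A)=\mathrm{areg}(A)$ (equivalently, no nonzero element is annihilated by an element of $\mathrm{areg}(A)$). *)

(* Defs.v *)
From HB Require Import structures.
From mathcomp Require Import all_boot all_algebra.
From mathcomp Require Import boolp.
Set Implicit Arguments. Unset Strict Implicit. Unset Printing Implicit Defensive.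
Import GRing.Theory.
Local Open Scope ring_scope.

Definition nilrad (A : comPzRingType) : A -> Prop :=
  fun x => exists n : nat, x ^+ n = 0.

Definition reg (A : comPzRingType) : A -> Prop :=
  fun x => forall a : A, x * a = 0 -> a = 0.

(* areg(A) = {x : x + N(A) regular in A/N(A)}, i.e. x a in N(A) => a in N(A). *)
Definition areg (A : comPzRingType) : A -> Prop :=
  fun x => forall a : A, nilrad (x * a) -> nilrad a.

Definition nearly_reduced (A : comPzRingType) : Prop :=
  forall x : A, reg x <-> areg x.

Section DProd.
Variables (I : Type) (R : I -> comPzRingType).
Definition dprod := forall i : I, R i.
HB.instance Definition _ := Choice.on dprod.

Definition dp_zero : dprod := fun i => 0.
Definition dp_one : dprod := fun i => 1.
Definition dp_opp (f : dprod) : dprod := fun i => - f i.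
Definition dp_add (f g : dprod) : dprod := fun i => f i + g i.
Definition dp_mul (f g : dprod) : dprod := fun i => f i * g i.

Lemma dp_addA : associative dp_add.
Proof. by move=> f g h; apply: functional_extensionality_dep => i; rewrite /dp_add addrA. Qed.
Lemma dp_addC : commutative dp_add.
Proof. by move=> f g; apply: functional_extensionality_dep => i; rewrite /dp_add addrC. Qed.
Lemma dp_add0 : left_id dp_zero dp_add.
Proof. by move=> f; apply: functional_extensionality_dep => i; rewrite /dp_add add0r. Qed.
Lemma dp_addN : left_inverse dp_zero dp_opp dp_add.
Proof. by move=> f; apply: functional_extensionality_dep => i; rewrite /dp_add /dp_opp addNr. Qed.
Lemma dp_mulA : associative dp_mul.
Proof. by move=> f g h; apply: functional_extensionality_dep => i; rewrite /dp_mul mulrA. Qed.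
Lemma dp_mulC : commutative dp_mul.
Proof. by move=> f g; apply: functional_extensionality_dep => i; rewrite /dp_mul mulrC. Qed.
Lemma dp_mul1 : left_id dp_one dp_mul.
Proof. by move=> f; apply: functional_extensionality_dep => i; rewrite /dp_mul mul1r. Qed.
Lemma dp_mulD : left_distributive dp_mul dp_add.
Proof. by move=> f g h; apply: functional_extensionality_dep => i; rewrite /dp_mul /dp_add mulrDl. Qed.

HB.instance Definition _ := GRing.isZmodule.Build dprod dp_addA dp_addC dp_add0 dp_addN.
HB.instance Definition _ := GRing.Zmodule_isComPzRing.Build dprod dp_mulA dp_mulC dp_mul1 dp_mulD.
End DProd.

Lemma dprodE (I : Type) (R : I -> comPzRingType) (f g : dprod R) (i : I) :
  (f + g) i = f i + g i /\ (f * g) i = f i * g i /\ (0 : dprod R) i = 0 /\ (1 : dprod R) i = 1.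
Proof. by []. Qed.

(* Main.v *)
Require Import Defs.
From mathcomp Require Import all_boot all_algebra.
From mathcomp Require Import boolp.
Set Implicit Arguments. Unset Strict Implicit.
Import GRing.Theory.
Local Open Scope ring_scope.

Lemma dp_exp (I : Type) (R : I -> comPzRingType) (f : dprod R) (n : nat) (i : I) :
  (f ^+ n) i = (f i) ^+ n.
Proof. elim: n => [|n IH]; first by rewrite !expr0. by rewrite !exprS -IH. Qed.

Lemma reg_exp (A : comPzRingType) (x : A) (n : nat) : reg x -> reg (x ^+ n).
Proof.
move=> rx; elim: n => [|n IH] b; first by rewrite expr0 mul1r.
by rewrite exprS -mulrA => /rx /IH.
Qed.

Lemma reg_areg (A : comPzRingType) (x : A) : reg x -> areg x.
Proof.
move=> rx a [n Hn]; exists n; rewrite exprMn in Hn.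
exact: (reg_exp (n:=n) rx Hn).
Qed.

Definition ext (I : Type) (R : I -> comPzRingType) (i : I) (x : R i) (d : forall j, R j) : dprod R :=
  fun j => match pselect (i = j) with left e => eq_rect i R x j e | right _ => d j end.

Lemma ext_at (I : Type) (R : I -> comPzRingType) (i : I) (x : R i) d : ext x d i = x.
Proof.
rewrite /ext; case: pselect => [e|//].
by rewrite (Prop_irrelevance e erefl).
Qed.

Lemma ext_off (I : Type) (R : I -> comPzRingType) (i j : I) (x : R i) d : i <> j -> ext x d j = d j.
Proof. by rewrite /ext; case: pselect. Qed.

Lemma nil0 (A : comPzRingType) : nilrad (0 : A).
Proof. by exists 1%N; rewrite expr1. Qed.

Theorem mainTheorem8 (I : Type) (R : I -> comPzRingType) :
  nearly_reduced (dprod R) <-> (forall i : I, nearly_reduced (R i)).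
Proof.
split.
- move=> H i x; split; first exact: reg_areg.
  move=> ax.
  pose X : dprod R := ext x (fun j => 1).
  have aX : areg X.
    move=> a [n Hn].
    have := f_equal (fun f : dprod R => f i) Hn; rewrite /= dp_exp.
    change ((X i * a i) ^+ n = 0 -> nilrad a).
    rewrite /X ext_at => Hi.
    have [m Hm] : nilrad (a i) by apply: ax; exists n.
    exists (maxn n m); apply: functional_extensionality_dep => j.
    rewrite dp_exp; case: (pselect (i = j)) => [<-|ne].
      by rewrite -(subnK (leq_maxr n m)) exprD Hm mulr0.
    have := f_equal (fun f : dprod R => f j) Hn; rewrite /= dp_exp.
    change ((X j * a j) ^+ n = 0 -> a j ^+ maxn n m = 0).
    rewrite /X (ext_off _ _ ne) mul1r => Hj.
    by rewrite -(subnK (leq_maxl n m)) exprD Hj mulr0.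
  have rX := (proj2 (H X)) aX.
  move=> b xb.
  have := f_equal (fun f : dprod R => f i) (rX (ext b (fun j => 0)) _).
  rewrite /= ext_at; apply.
  apply: functional_extensionality_dep => j.
  change (X j * ext b (fun j => 0) j = 0).
  case: (pselect (i = j)) => [<-|ne]; first by rewrite /X !ext_at.
  by rewrite (ext_off _ _ ne) mulr0.
- move=> H X; split; first exact: reg_areg.
  move=> aX.
  have ai : forall i, areg (X i).
    move=> i a [n Hn].
    have : nilrad (ext a (fun j => 0)).
      apply: aX; exists n.+1; apply: functional_extensionality_dep => j.
      rewrite dp_exp.
      change ((X j * ext a (fun j => 0) j) ^+ n.+1 = 0).
      case: (pselect (i = j)) => [<-|ne]; first by rewrite ext_at exprS Hn mulr0.
      by rewrite (ext_off _ _ ne) mulr0 expr0n.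
    move=> [m Hm]; exists m.
    by have := f_equal (fun f : dprod R => f i) Hm; rewrite /= dp_exp ext_at.
  move=> A XA; apply: functional_extensionality_dep => i.
  apply: ((proj2 (H i (X i))) (ai i)).
  exact: (f_equal (fun f : dprod R => f i) XA).
Qed.
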